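(* Let $m$ be a positive integer and let $\mathcal{P}\in\mathbb{R}^{m\times 123}$ be the bar code forward map $\mathcal{P}=\alpha\,\mathcal{G}(\sigma)\,\mathcal{D}$ described in the context, with columns labelled $p^{(j)}_k$ ($j\in[15]$, $k\in K_j$). Let $I_1,\dots,I_{15}\subset[m]$ and $\varepsilon\in\mathbb{R}$ satisfy (i) $\big\| p^{(j)}_k|_{[m]\setminus I_j}\big\|_1<\varepsilon$ for all $j\in[15]$ and all $k\in K_j$; and (ii) $\Big\| \big(\sum_{j'=j+1}^{15} p^{(j')}_{k_{j'}}\big)\big|_{I_j}\Big\|_1<\varepsilon$ for all $j\in[15]$ and all choices $k_{j+1}\in K_{j+1},\dots,k_{15}\in K_{15}$ (the empty sum, for $j=15$, being $0$). Let $x\in\{0,1\}^{123}$ be a bar code vector, let $h\in\mathbb{R}^m$, and let $d=\mathcal{P}x+h$. Suppose that $$\big\| p^{(j)}_{k_1}|_{I_j}-p^{(j)}_{k_2}|_{I_j}\big\|_1>2\big(\|h|_{I_j}\|_1+2\varepsilon\big)$$ for all $j\in[15]$ and all $k_1,k_2\in K_j$ with $k_1\neq k_2$. Then Algorithm 1, run on input $d$, outputs $\hat x=x$ (regardless of how ties in the argmin are broken).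
   Context: Notation: $[m]=\{1,\dots,m\}$. For $v\in\mathbb{R}^m$ and $S\subset[m]$, $v|_S$ denotes the vector of entries of $v$ indexed by $S$, and $\|\cdot\|_1$ is the $\ell_1$ norm. Forward map. Let $n=95$, let $t_1,\dots,t_m\in[0,95]$ be equally spaced points, and let $\sigma>0$, $\alpha>0$. $\mathcal{G}(\sigma)\in\mathbb{R}^{m\times 95}$ has entries $\mathcal{G}_{kj}=\frac{1}{\sqrt{2\pi}\sigma}\int_{j-1}^{j} e^{-(t_k-t)^2/(2\sigma^2)}\,dt$. Let $L,R$ be the $7\times 10$ binary matrices whose $(d+1)$-st column ($d=0,\dots,9$) is respectively the L-pattern and the R-pattern of digit $d$, where the L-patterns for digits $0,\dots,9$ are $0001101,0011001,0010011,0111101,0100011,0110001,0101111,0111011,0110111,0001011$ and each R-pattern is the corresponding L-pattern with $0$s and $1$s interchanged. Let $S=E=(1,0,1)^T$ and $M=(0,1,0,1,0)^T$. $\mathcal{D}\in\{0,1\}^{95\times 123}$ is the block-diagonal matrix $\mathrm{diag}(S,L,L,L,L,L,L,M,R,R,R,R,R,R,E)$. Set $\mathcal{P}=\alpha\mathcal{G}(\sigma)\mathcal{D}$. Column labelling. Let $K_j=\{1\}$ for $j\in\{1,8,15\}$ and $K_j=[10]$ otherwise. $p^{(1)}_1$ is column 1 of $\mathcal{P}$; for $j=2,\dots,7$ and $k\in[10]$, $p^{(j)}_k$ is column $1+10(j-2)+k$; $p^{(8)}_1$ is column 62; for $j=9,\dots,14$ and $k\in[10]$, $p^{(j)}_k$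 is column $62+10(j-9)+k$; $p^{(15)}_1$ is column 123. Bar code vector: $x\in\{0,1\}^{123}$ with $x_1=x_{62}=x_{123}=1$ and such that each of the twelve consecutive blocks of $10$ entries with indices $2\!-\!11,12\!-\!21,\dots,52\!-\!61,63\!-\!72,\dots,113\!-\!122$ contains exactly one entry equal to $1$; equivalently $\mathcal{P}x=\sum_{j=1}^{15}p^{(j)}_{k_j}$ for some $k_j\in K_j$. Algorithm 1 (input $d\in\mathbb{R}^m$): set $\hat x_\ell=1$ for $\ell\in\{1,62,123\}$ and $\hat x_\ell=0$ otherwise; set $\delta\leftarrow d-p^{(1)}_1$. For $j=2,3,\dots,14$ in increasing order: if $j=8$, set $\delta\leftarrow\delta-p^{(8)}_1$; otherwise choose $k_{\min}\in\arg\min_{k\in[10]}\|\delta-p^{(j)}_k\|_1$, set $\hat x_\ell=1$ where $\ell$ is the column index of $p^{(j)}_{k_{\min}}$ (i.e. $\ell=1+10(j-2)+k_{\min}$ if $j\le7$, $\ell=62+10(j-9)+k_{\min}$ if $j\ge9$), and set $\delta\leftarrow\delta-p^{(j)}_{k_{\min}}$. Output $\hat x$. *)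

(* Defs.v *)
From HB Require Import structures.
From mathcomp Require Import all_boot all_order all_algebra.
From mathcomp Require Import all_classical all_reals all_analysis.
Set Implicit Arguments. Unset Strict Implicit. Unset Printing Implicit Defensive.
Import Order.TTheory GRing.Theory Num.Theory.
Import numFieldNormedType.Exports.
Local Open Scope ring_scope.

(* Conventions: rows/columns of matrices are 0-based ('I_n); the labels
   j in [15], k in K_j and the block indices are 1-based as in the paper. *)

Definition Lpat (d : nat) : seq bool :=
  nth [::] [:: [:: false;false;false;true;true;false;true];
               [:: false;false;true;true;false;false;true];
               [:: false;false;true;false;false;true;true];
               [:: false;true;true;true;true;false;true];
               [:: false;true;false;false;false;true;true];
               [:: false;true;true;false;false;false;true];
               [:: false;true;false;true;true;true;true];
               [:: false;true;true;true;false;true;true];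
               [:: false;true;true;false;true;true;true];
               [:: false;false;false;true;false;true;true] ] d.
Definition Rpat (d : nat) : seq bool := map negb (Lpat d).
Definition SEpat : seq bool := [:: true; false; true].
Definition Mpat : seq bool := [:: false; true; false; true; false].

(* Entry (r, c) (0-based) of the block diagonal matrix
   D = diag(S, L,L,L,L,L,L, M, R,R,R,R,R,R, E) in {0,1}^{95 x 123}.
   Row blocks: S rows 0-2, L blocks rows 3+7b..9+7b (b=0..5), M rows 45-49,
   R blocks rows 50+7b..56+7b (b=0..5), E rows 92-94.
   Column blocks: S col 0, L blocks cols 1+10b..10+10b, M col 61,
   R blocks cols 62+10b..71+10b, E col 122. *)
Definition Dentry (r c : nat) : bool :=
  if c == 0%N then (r < 3)%N && nth false SEpat r
  else if (c < 61)%N then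
    let b := ((c - 1) %/ 10)%N in let dg := ((c - 1) %% 10)%N in
    [&& (3 + 7 * b <= r)%N, (r < 3 + 7 * b + 7)%N & nth false (Lpat dg) (r - (3 + 7 * b))]
  else if c == 61%N then [&& (45 <= r)%N, (r < 50)%N & nth false Mpat (r - 45)]
  else if (c < 122)%N then
    let b := ((c - 62) %/ 10)%N in let dg := ((c - 62) %% 10)%N in
    [&& (50 + 7 * b <= r)%N, (r < 50 + 7 * b + 7)%N & nth false (Rpat dg) (r - (50 + 7 * b))]
  else [&& c == 122%N, (92 <= r)%N, (r < 95)%N & nth false SEpat (r - 92)].

Definition Dmat (R : realType) : 'M[R]_(95, 123) :=
  \matrix_(r < 95, c < 123) (Dentry r c)%:R.

(* G(sigma) with sampling points t : 'I_m -> R;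
   G_{kj} = 1/(sqrt(2 pi) sigma) * int_{j-1}^{j} exp(-(t_k - t)^2/(2 sigma^2)) dt
   (here j is 0-based, so the interval is [j, j+1]). *)
Definition Gmat (R : realType) (m : nat) (t : 'I_m -> R) (sigma : R) : 'M[R]_(m, 95) :=
  \matrix_(k < m, j < 95)
    ((Num.sqrt (2 * pi) * sigma)^-1 *
     Rintegral (@lebesgue_measure R) `[(j%:R : R), (j.+1%:R : R)]%classic
       (fun s => expR (- (t k - s) ^+ 2 / (2 * sigma ^+ 2)))).

Definition Pmat (R : realType) (m : nat) (t : 'I_m -> R) (sigma alpha : R) : 'M[R]_(m, 123) :=
  alpha *: (Gmat t sigma *m Dmat R).

Definition Kset (j : nat) : seq nat :=
  if j \in [:: 1%N; 8%N; 15%N] then [:: 1%N] else iota 1 10.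

(* 0-based column index of p^{(j)}_k. *)
Definition colidx (j k : nat) : nat :=
  if j == 1%N then 0%N
  else if (j <= 7)%N then (10 * (j - 2) + k)%N
  else if j == 8%N then 61%N
  else if (j <= 14)%N then (61 + 10 * (j - 9) + k)%N
  else 122%N.

Definition pcol (R : realType) (m : nat) (P : 'M[R]_(m, 123)) (j k : nat) : 'cV[R]_m :=
  col (inord (colidx j k)) P.

Definition l1 (R : realType) (m : nat) (v : 'cV[R]_m) (S : {set 'I_m}) : R :=
  \sum_(i in S) `|v i ord0|.

Definition is_barcode (R : realType) (x : 'cV[R]_123) : Prop :=
  (forall i : 'I_123, x i ord0 = 0 \/ x i ord0 = 1) /\
  x (inord 0) ord0 = 1 /\ x (inord 61) ord0 = 1 /\ x (inord 122) ord0 = 1 /\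
  (forall b : nat, (b < 6)%N ->
     #|[set i : 'I_123 | (1 + 10 * b <= i < 11 + 10 * b)%N && (x i ord0 == 1)]| = 1%N /\
     #|[set i : 'I_123 | (62 + 10 * b <= i < 72 + 10 * b)%N && (x i ord0 == 1)]| = 1%N).

(* Algorithm 1, with the choices of k_min given by ks : nat -> nat (ks j
   used at step j).  resid P d ks n = value of delta at the start of the
   loop iteration j = n + 2. *)
Fixpoint resid (R : realType) (m : nat) (P : 'M[R]_(m, 123)) (d : 'cV[R]_m)
  (ks : nat -> nat) (n : nat) : 'cV[R]_m :=
  match n with
  | 0%N => d - pcol P 1 1
  | n'.+1 => let j := (n' + 2)%N in
      if j == 8%N then resid P d ks n' - pcol P 8 1
      else resid P d ks n' - pcol P j (ks j)
  end.

(* ks is a legitimate sequence of choices of Algorithm 1 on input d: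
   at every step j in {2..14}\{8}, ks j is an argmin over k in [10]. *)
Definition alg1_run (R : realType) (m : nat) (P : 'M[R]_(m, 123)) (d : 'cV[R]_m)
  (ks : nat -> nat) : Prop :=
  forall j : nat, (2 <= j <= 14)%N -> j != 8%N ->
    ks j \in iota 1 10 /\
    forall k, k \in iota 1 10 ->
      l1 (resid P d ks (j - 2) - pcol P j (ks j)) [set: 'I_m]%SET
      <= l1 (resid P d ks (j - 2) - pcol P j k) [set: 'I_m]%SET.

Definition alg1_out (R : realType) (ks : nat -> nat) : 'cV[R]_123 :=
  \col_(l < 123)
    (if (nat_of_ord l \in [:: 0%N; 61%N; 122%N]) ||
        has (fun j => (j != 8%N) && (colidx j (ks j) == l)) (iota 2 13)
     then 1 else 0).

(* Main.v *)
Require Import Defs.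
From HB Require Import structures.
From mathcomp Require Import all_boot all_order all_algebra.
From mathcomp Require Import all_classical all_reals all_analysis.
From mathcomp Require Import lra zify.
Import Order.TTheory GRing.Theory Num.Theory.
Local Open Scope ring_scope.

Lemma F1 : flatten [seq [seq colidx j k | k <- Kset j] | j <- iota 1 15] = iota 0 123.
Proof. by vm_compute. Qed.

Lemma F2 : all (fun j => all (fun j' => all (fun k => all (fun k' =>
  (colidx j k == colidx j' k') ==> (j == j') && (k == k')) (Kset j')) (Kset j)) (iota 1 15)) (iota 1 15).
Proof. by vm_compute. Qed.

Lemma F3 : all (fun j => all (fun k => (colidx j k \in [:: 0%N; 61%N; 122%N]) == (j \in [:: 1%N; 8%N; 15%N])) (Kset j)) (iota 1 15).
Proof. by vm_compute. Qed.

Lemma F4 : all (fun j => all (fun k => (colidx j k < 123)%N) (Kset j)) (iota 1 15).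
Proof. by vm_compute. Qed.

Lemma colidx_inj j j' k k' : j \in iota 1 15 -> j' \in iota 1 15 -> k \in Kset j -> k' \in Kset j' ->
  colidx j k = colidx j' k' -> j = j' /\ k = k'.
Proof.
move=> hj hj' hk hk' e.
have := F2 => /allP /(_ j hj) /allP /(_ j' hj') /allP /(_ k hk) /allP /(_ k' hk').
by rewrite e eqxx /= => /andP [/eqP -> /eqP ->].
Qed.

Lemma colidx_spec j k : j \in iota 1 15 -> k \in Kset j ->
  (colidx j k \in [:: 0%N; 61%N; 122%N]) = (j \in [:: 1%N; 8%N; 15%N]).
Proof. by move=> hj hk; have := F3 => /allP /(_ j hj) /allP /(_ k hk) /eqP. Qed.

Lemma colidx_lt j k : j \in iota 1 15 -> k \in Kset j -> (colidx j k < 123)%N.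
Proof. by move=> hj hk; have := F4 => /allP /(_ j hj) /allP /(_ k hk). Qed.

Lemma l1D (R : realType) m (u v : 'cV[R]_m) S : l1 (u + v) S <= l1 u S + l1 v S.
Proof. rewrite /l1 -big_split /=; apply: ler_sum => i _; rewrite !mxE; exact: ler_normD. Qed.

Lemma l1N (R : realType) m (v : 'cV[R]_m) S : l1 (- v) S = l1 v S.
Proof. by rewrite /l1; apply: eq_bigr => i _; rewrite mxE normrN. Qed.

Arguments l1N {R m} v S.
Arguments l1D {R m} u v S.
Lemma l1B (R : realType) m (u v : 'cV[R]_m) S : l1 (u - v) S <= l1 u S + l1 v S.
Proof. by rewrite -(l1N v); apply: l1D. Qed.

Arguments l1B {R m} u v S.
Lemma l1T (R : realType) m (u : 'cV[R]_m) S : l1 u [set: 'I_m]%SET = l1 u S + l1 u (~: S).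
Proof. by rewrite /l1 (big_setID S) /= finset.setTI finset.setTD. Qed.

Arguments l1T {R m} u S.
Lemma key (R : realType) m (a b r h : 'cV[R]_m) (I : {set 'I_m}) eps :
  l1 r I < eps -> l1 a (~: I) < eps -> l1 b (~: I) < eps ->
  l1 (a - b) I > 2 * (l1 h I + 2 * eps) ->
  l1 (a + r + h - a) [set: 'I_m]%SET < l1 (a + r + h - b) [set: 'I_m]%SET.
Proof.
move=> hr ha hb hs.
have e1 : a + r + h - a = r + h by apply/matrixP => i j; rewrite !mxE; lra.
have e2 : a - b = (a + r + h - b) - (r + h) by apply/matrixP => i j; rewrite !mxE; lra.
have e3 : r + h = (a + r + h - b) - (a - b) by apply/matrixP => i j; rewrite !mxE; lra.
rewrite e1 (l1T _ I) (l1T (a + r + h - b) I).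
have i1 := l1B (a + r + h - b) (r + h) I; rewrite -e2 in i1.
have i2 := l1D r h I.
have i3 := l1B (a + r + h - b) (a - b) (~: I); rewrite -e3 in i3.
have i4 := l1B a b (~: I).
lra.
Qed.


Definition kstar (R : realType) (x : 'cV[R]_123) (j : nat) : nat :=
  if j \in [:: 1%N; 8%N; 15%N] then 1%N
  else (odflt ord0 [pick k : 'I_10 | x (inord (colidx j k.+1)) ord0 == 1]).+1.

Arguments kstar {R} x j.
Lemma kstar_in (R : realType) (x : 'cV[R]_123) j : kstar x j \in Kset j.
Proof.
rewrite /kstar /Kset; case: ifP => // _.
rewrite mem_iota; case: [pick k : 'I_10 | _] => [k|] //=.
by rewrite add1n ltnS ltn_ord.
Qed.

Lemma block (R : realType) (x : 'cV[R]_123) j : is_barcode x ->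
  j \in iota 1 15 -> j \notin [:: 1%N; 8%N; 15%N] ->
  exists lo, (forall k, colidx j k = lo + k)%N /\ (lo + 11 <= 123)%N /\
   #|[set i : 'I_123 | (lo.+1 <= i < lo + 11)%N && (x i ord0 == 1)]| = 1%N.
Proof.
move=> [_ [_ [_ [_ hb]]]] hj hns.
move: hj; rewrite mem_iota => /andP [h1 h2].
have hj8 : j <> 8%N by move=> e; move: hns; rewrite e.
have hj1 : j <> 1%N by move=> e; move: hns; rewrite e.
have hj15 : j <> 15%N by move=> e; move: hns; rewrite e.
have [hL|hR] : (2 <= j <= 7)%N \/ (9 <= j <= 14)%N by lia.
- have hb6 : (j - 2 < 6)%N by lia.
  exists (10 * (j - 2))%N; split; [|split; [lia|]].
    move=> k; rewrite /colidx; have -> : (j == 1%N) = false by apply/eqP.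
    by have -> : (j <= 7)%N by lia.
  rewrite -[RHS](hb _ hb6).1; congr #|pred_of_set _|; apply/setP => i; rewrite !inE.
  congr (_ && _); apply/idP/idP; lia.
- have hb6 : (j - 9 < 6)%N by lia.
  exists (61 + 10 * (j - 9))%N; split; [|split; [lia|]].
    move=> k; rewrite /colidx; have -> : (j == 1%N) = false by apply/eqP.
    have -> : (j <= 7)%N = false by lia.
    have -> : (j == 8%N) = false by apply/eqP.
    by have -> : (j <= 14)%N by lia.
  rewrite -[RHS](hb _ hb6).2; congr #|pred_of_set _|; apply/setP => i; rewrite !inE.
  congr (_ && _); apply/idP/idP; lia.
Qed.

Arguments block {R x j}.
Lemma xval (R : realType) (x : 'cV[R]_123) j k : is_barcode x ->
  j \in iota 1 15 -> k \in Kset j ->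
  x (inord (colidx j k)) ord0 = (k == kstar x j)%:R.
Proof.
move=> hx hj hk.
case hs: (j \in [:: 1%N; 8%N; 15%N]).
  rewrite /kstar hs; move: hk; rewrite /Kset hs inE => /eqP ->; rewrite eqxx.
  case: hx => _ [h0 [h61 [h122 _]]].
  by move: hs; rewrite !inE => /or3P [/eqP->|/eqP->|/eqP->]; [exact: h0|exact: h61|exact: h122].
have [lo [hcol [hlo hcard]]] := block hx hj (negbT hs).
have hK : Kset j = iota 1 10 by rewrite /Kset hs.
set S := [set i : 'I_123 | _] in hcard.
have /cards1P [i0 hS] : #|S| == 1%N by rewrite hcard.
have memS : forall k', k' \in iota 1 10 ->
    (x (inord (colidx j k')) ord0 == 1) = (inord (colidx j k') == i0).
  move=> k' hk'; rewrite -finset.in_set1 -hS !inE hcol inordK; last first.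
    by move: hk'; rewrite mem_iota; lia.
  by move: hk'; rewrite mem_iota => /andP [a b]; rewrite (_ : (lo.+1 <= lo + k' < lo + 11)%N) //; lia.
have i0S : i0 \in S by rewrite hS finset.set11.
have [hi0a hi0b] : (lo.+1 <= i0)%N /\ (i0 < lo + 11)%N.
  by move: i0S; rewrite !inE => /andP [/andP [a b] _].
have ks_prop : (x (inord (colidx j (kstar x j))) ord0 == 1).
  rewrite /kstar hs; case: pickP => [k1 -> //|hnone].
  have hk0 : (i0 - lo.+1 < 10)%N by lia.
  have := hnone (Ordinal hk0); rewrite /= hcol.
  have -> : (lo + (i0 - lo.+1).+1)%N = i0 by lia.
  rewrite inord_val.
  by move: i0S; rewrite !inE => /andP [_ ->].
have ksin : kstar x j \in iota 1 10 by rewrite -hK kstar_in.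
have hkk : forall k', k' \in iota 1 10 -> (x (inord (colidx j k')) ord0 == 1) = (k' == kstar x j).
  move=> k' hk'; rewrite memS //.
  move: ks_prop; rewrite memS // => /eqP e.
  apply/eqP/eqP => [e'|->//].
  have := congr1 (@nat_of_ord 123) (etrans e' (esym e)).
  rewrite !inordK ?hcol; [lia| |]; move: hk' ksin; rewrite !mem_iota; lia.
rewrite hK in hk; have := hkk k hk.
case: (hx.1 (inord (colidx j k))) => ->.
  by rewrite eq_sym oner_eq0 => <-.
by rewrite eqxx => /esym ->.
Qed.


Arguments kstar_in {R} x j.
Arguments xval {R} x j k.
Lemma Kset_uniq j : uniq (Kset j).
Proof. by rewrite /Kset; case: ifP. Qed.

Lemma Pmx (R : realType) m (P : 'M[R]_(m, 123)) (x : 'cV[R]_123) : is_barcode x ->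
  P *m x = \sum_(1 <= j < 16) pcol P j (kstar x j).
Proof.
move=> hx; apply/matrixP => i c; rewrite (ord1 c) !mxE summxE.
transitivity (\sum_(l <- iota 0 123) P i (inord l) * x (inord l) ord0).
  have -> : iota 0 123 = index_iota 0 123 by [].
  by rewrite big_mkord; apply: eq_bigr => l _; rewrite inord_val.
rewrite -F1 big_flatten big_map.
have -> : index_iota 1 16 = iota 1 15 by [].
rewrite big_seq [RHS]big_seq; apply: eq_bigr => j hj.
have hk0 := kstar_in x j.
rewrite big_map !mxE (big_rem (kstar x j)) // xval // eqxx mulr1.
rewrite big_seq big1 => [|k]; first by rewrite /= addr0.
rewrite mem_rem_uniq ?Kset_uniq // inE => /andP [hne hk].
by rewrite xval // (negbTE hne) mulr0.
Qed.

Arguments key {R m}.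
Arguments colidx_inj {j j' k k'}.
Arguments Pmx {R m} P x.

Lemma main (R : realType) (m : nat) (P : 'M[R]_(m, 123))
  (I : nat -> {set 'I_m}) (eps : R)
  (hi : forall j k, (1 <= j <= 15)%N -> k \in Kset j ->
          l1 (pcol P j k) (~: I j) < eps)
  (hii : forall j (ks : nat -> nat), (1 <= j <= 15)%N ->
          (forall j', (j < j' <= 15)%N -> ks j' \in Kset j') ->
          l1 (\sum_(j.+1 <= j' < 16) pcol P j' (ks j')) (I j) < eps)
  (x : 'cV[R]_123) (hx : is_barcode x) (h : 'cV[R]_m)
  (hsep : forall j k1 k2, (1 <= j <= 15)%N -> k1 \in Kset j -> k2 \in Kset j -> k1 != k2 ->
          l1 (pcol P j k1 - pcol P j k2) (I j)
          > 2 * (l1 h (I j) + 2 * eps))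
  (ks : nat -> nat)
  (hrun : alg1_run P (P *m x + h) ks) :
  alg1_out R ks = x.
Proof.
set d := P *m x + h.
pose St j := \sum_(j <= j' < 16) pcol P j' (kstar x j').
have Ssplit : forall j, (j < 16)%N -> St j = pcol P j (kstar x j) + St j.+1.
  by move=> j hj; rewrite /St big_ltn.
have step : forall j, (2 <= j <= 14)%N -> j != 8%N ->
    resid P d ks (j - 2)%N = St j + h -> ks j = kstar x j.
  move=> j hj hj8 hres; have [hksin hmin] := hrun j hj hj8.
  have hns : (j \in [:: 1%N; 8%N; 15%N]) = false.
    by rewrite !inE (negbTE hj8); apply/negbTE; move: hj; lia.
  have hK : Kset j = iota 1 10 by rewrite /Kset hns.
  have hj15 : (1 <= j <= 15)%N by lia.
  apply/eqP; apply/negPn/negP => hne.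
  have hmin' := hmin (kstar x j) ltac:(by rewrite -hK kstar_in).
  rewrite hres (Ssplit j) in hmin'; last by lia.
  have := key (pcol P j (kstar x j)) (pcol P j (ks j)) (St j.+1) h (I j) eps
    (hii j (kstar x) hj15 (fun j' _ => kstar_in x j'))
    (hi j (kstar x j) hj15 (kstar_in x j)) (hi j (ks j) hj15 ltac:(by rewrite hK))
    (hsep j (kstar x j) (ks j) hj15 (kstar_in x j) ltac:(by rewrite hK) ltac:(by rewrite eq_sym)).
  by rewrite ltNge hmin'.
have claim : forall n, (n <= 12)%N -> resid P d ks n = St (n + 2)%N + h.
  elim => [_|n IH hn].
    rewrite /= /d (_ : P *m x = St 1%N); last exact: Pmx.
    rewrite (Ssplit 1%N) // ?add0n (_ : kstar x 1 = 1%N) //.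
    by apply/matrixP => a b; rewrite !mxE; lra.
  have IH' := IH (ltnW hn).
  rewrite /=; case: (eqVneq (n + 2)%N 8%N) => [e|ne].
    rewrite /= IH' e (Ssplit 8%N) // addSn e (_ : kstar x 8 = 1%N) //.
    by apply/matrixP => a b; rewrite !mxE; lra.
  rewrite /= IH' (Ssplit (n + 2)%N); last by lia.
  rewrite (step (n + 2)%N) ?addnK // ?addSn; last by lia.
  by apply/matrixP => a b; rewrite !mxE; lra.
have hks : forall j, (2 <= j <= 14)%N -> j != 8%N -> ks j = kstar x j.
  move=> j hj hj8; apply: step => //; rewrite claim; last by lia.
  by rewrite subnK //; lia.
apply/matrixP => l c; rewrite (ord1 c) mxE.
have hl : nat_of_ord l \in flatten [seq [seq colidx j k | k <- Kset j] | j <- iota 1 15].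
  by rewrite F1 mem_iota /= ltn_ord.
case/flattenP: hl => s /mapP [j hj ->] /mapP [k hk el].
rewrite (_ : x l ord0 = x (inord (colidx j k)) ord0); last by rewrite -el inord_val.
rewrite xval // el.
have -> : has (fun j0 => (j0 != 8%N) && (colidx j0 (ks j0) == colidx j k)) (iota 2 13) =
          has (fun j0 => (j0 != 8%N) && (colidx j0 (kstar x j0) == colidx j k)) (iota 2 13).
  apply: eq_in_has => j0 hj0; case: eqVneq => //= hne; rewrite hks //.
  by move: hj0; rewrite mem_iota; lia.
rewrite colidx_spec //.
case hs: (j \in [:: 1%N; 8%N; 15%N]).
  move: hk; rewrite /Kset hs inE => /eqP ->.
  by rewrite /kstar hs eqxx.
rewrite orFb.
have -> : has (fun j0 => (j0 != 8%N) && (colidx j0 (kstar x j0) == colidx j k)) (iota 2 13) =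
          (k == kstar x j).
  apply/hasP/eqP.
    case=> j0 hj0 /andP [hne /eqP e].
    have hj0' : j0 \in iota 1 15 by move: hj0; rewrite !mem_iota; lia.
    by have [-> ->] := colidx_inj hj0' hj (kstar_in x j0) hk e.
  move=> ->; exists j; last by rewrite eqxx andbT; apply/eqP => e; move: hs; rewrite e.
  have n1 : j <> 1%N by move=> e; move: hs; rewrite e.
  have n15 : j <> 15%N by move=> e; move: hs; rewrite e.
  by move: hj; rewrite !mem_iota; lia.
by case: (k == kstar x j).
Qed.

Theorem theorem1 (R : realType) (m : nat) (hm : (0 < m)%N)
  (sigma alpha : R) (hsigma : 0 < sigma) (halpha : 0 < alpha)
  (t : 'I_m -> R) (t0 step : R)
  (ht : forall k : 'I_m, t k = t0 + (nat_of_ord k)%:R * step)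
  (hstep : 0 < step) (ht0 : 0 <= t0) (ht1 : t0 + (m.-1)%:R * step <= 95)
  (I : nat -> {set 'I_m}) (eps : R)
  (hi : forall j k, (1 <= j <= 15)%N -> k \in Kset j ->
          l1 (pcol (Pmat t sigma alpha) j k) (~: I j) < eps)
  (hii : forall j (ks : nat -> nat), (1 <= j <= 15)%N ->
          (forall j', (j < j' <= 15)%N -> ks j' \in Kset j') ->
          l1 (\sum_(j.+1 <= j' < 16) pcol (Pmat t sigma alpha) j' (ks j')) (I j) < eps)
  (x : 'cV[R]_123) (hx : is_barcode x) (h : 'cV[R]_m)
  (hsep : forall j k1 k2, (1 <= j <= 15)%N -> k1 \in Kset j -> k2 \in Kset j -> k1 != k2 ->
          l1 (pcol (Pmat t sigma alpha) j k1 - pcol (Pmat t sigma alpha) j k2) (I j)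
          > 2 * (l1 h (I j) + 2 * eps))
  (ks : nat -> nat)
  (hrun : alg1_run (Pmat t sigma alpha) (Pmat t sigma alpha *m x + h) ks) :
  alg1_out R ks = x.
Proof.
exact: (@main R m _ I eps hi hii x hx h hsep ks hrun).
Qed.
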